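(* Let $D$ be a probability distribution on a finite set $\Omega$ with $\mathrm{cp}(D)\le1/N$ for a positive integer $N$, and let $g:\Omega\to\mathbb R$. Then there is a set $T\subseteq\Omega$ of size $N$ such that $\mathbb E_{x\in T}g(x)^2\ge(\mathbb E\,g(D))^2/4$.
   Context: $\mathrm{cp}(D)$ is the collision probability of $D$, i.e. the probability that two independent samples from $D$ are equal. $\mathbb E_{x\in T}$ denotes the uniform average over $T$, and $\mathbb E\,g(D)$ is the expectation of $g$ under $D$. *)

(* Defs.v *)
From HB Require Import structures.
From mathcomp Require Import all_boot all_order all_algebra.
Set Implicit Arguments. Unset Strict Implicit. Unset Printing Implicit Defensive.
Import Order.TTheory GRing.Theory Num.Theory.
Local Open Scope ring_scope.

Definition is_distribution (R : realFieldType) (Omega : finType) (D : Omega -> R) : Prop :=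
  (forall x, 0 <= D x) /\ \sum_(x : Omega) D x = 1.

(* Collision probability: Pr[X = Y] for X, Y independent samples of D. *)
Definition cp (R : realFieldType) (Omega : finType) (D : Omega -> R) : R :=
  \sum_(x : Omega) D x ^+ 2.

Definition expect (R : realFieldType) (Omega : finType) (D : Omega -> R) (g : Omega -> R) : R :=
  \sum_(x : Omega) D x * g x.

Definition avg (R : realFieldType) (Omega : finType) (T : {set Omega}) (f : Omega -> R) : R :=
  (\sum_(x in T) f x) / (#|T|%:R).

(* Main.v *)
Require Import Defs.
From HB Require Import structures.
From mathcomp Require Import all_boot all_order all_algebra.
From mathcomp Require Import ring lra.
Import Order.TTheory GRing.Theory Num.Theory.
Local Open Scope ring_scope.

Lemma wCS (R : realFieldType) (I : finType) (P : pred I) (w u v : I -> R) :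
  (forall x, P x -> 0 <= w x) ->
  (\sum_(x | P x) w x * u x * v x) ^+ 2 <=
  (\sum_(x | P x) w x * u x ^+ 2) * (\sum_(x | P x) w x * v x ^+ 2).
Proof.
move=> w0.
set A := \sum_(x | P x) w x * u x ^+ 2.
set B := \sum_(x | P x) w x * v x ^+ 2.
set C := \sum_(x | P x) w x * u x * v x.
have H : \sum_(x | P x) \sum_(y | P y) w x * w y * (u x * v y - u y * v x) ^+ 2
   = A * B + A * B - 2 * (C * C).
  have E1 : A * B = \sum_(x | P x) \sum_(y | P y) (w x * u x ^+ 2) * (w y * v y ^+ 2).
    by rewrite /A mulr_suml; apply: eq_bigr => x _; rewrite mulr_sumr.
  have E2 : A * B = \sum_(x | P x) \sum_(y | P y) (w y * u y ^+ 2) * (w x * v x ^+ 2).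
    rewrite mulrC /B mulr_suml; apply: eq_bigr => x _; rewrite mulr_sumr.
    by apply: eq_bigr => y _; rewrite mulrC.
  have E3 : C * C = \sum_(x | P x) \sum_(y | P y) (w x * u x * v x) * (w y * u y * v y).
    by rewrite /C mulr_suml; apply: eq_bigr => x _; rewrite mulr_sumr.
  rewrite {1}E1 E2 E3 -big_split mulr_sumr -sumrB.
  apply: eq_bigr => x _; rewrite -big_split mulr_sumr -sumrB.
  by apply: eq_bigr => y _ /=; ring.
have : 0 <= A * B + A * B - 2 * (C * C).
  rewrite -H; apply: sumr_ge0 => x Px; apply: sumr_ge0 => y Py.
  by rewrite mulr_ge0 ?sqr_ge0 // mulr_ge0 // w0.
rewrite expr2; lra.
Qed.

Lemma sub_sum_le (R : realFieldType) (I : finType) (P : pred I) (F : I -> R) :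
  (forall x, 0 <= F x) -> \sum_(x | P x) F x <= \sum_x F x.
Proof.
move=> F0; rewrite [X in _ <= X](bigID P) /= lerDl.
by apply: sumr_ge0 => x _.
Qed.

Theorem lemma8p4 (R : realFieldType) (Omega : finType) (D : Omega -> R) (N : nat)
  (g : Omega -> R) :
  (0 < N)%N -> is_distribution D -> cp D <= N%:R^-1 ->
  exists T : {set Omega}, #|T| = N /\
    avg T (fun x => g x ^+ 2) >= (expect D g) ^+ 2 / 4.
Proof.
move=> N0 [D0 D1] hcp.
have n0 : 0 < (N%:R : R) by rewrite ltr0n.
have NO : (N <= #|Omega|)%N.
  have := @wCS R Omega predT (fun _ => 1) (fun _ => 1) D (fun _ _ => ler01).
  rewrite /=.
  under eq_bigr do rewrite !mul1r.
  under [X in _ <= X * _]eq_bigr do rewrite expr1n mulr1.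
  under [X in _ <= _ * X]eq_bigr do rewrite mul1r.
  rewrite D1 expr1n sumr_const -/(cp D) => h1.
  have : 1 <= #|Omega|%:R * N%:R^-1 :> R.
    apply: (le_trans h1); apply: ler_wpM2l => //; exact: ler0n.
  rewrite ler_pdivlMr // mul1r ler_nat; by [].
have [s [us ss _]] := card_geqP NO.
set T0 : {set Omega} := [set x in s].
have cT0 : #|T0| = N by rewrite cardsE -ss; apply/card_uniqP.
set h := fun x => g x ^+ 2.
pose T := Order.arg_max T0 (fun T : {set Omega} => #|T| == N) (fun T : {set Omega} => \sum_(x in T) h x).
have HT : #|T| == N /\ forall T' : {set Omega}, #|T'| == N ->
    \sum_(x in T') h x <= \sum_(x in T) h x.
  have P0 : #|T0| == N by rewrite cT0.
  rewrite /T; case: (@arg_maxP _ _ _ T0 (fun T : {set Omega} => #|T| == N) (fun T : {set Omega} => \sum_(x in T) h x) P0).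
  move=> T1 c1 m1; split => // T2 c2; exact: m1.
case: HT => /eqP cT Tmax.
exists T; split => //.
set S := \sum_(x in T) h x.
have avgE : avg T h = S / N%:R by rewrite /avg cT.
have off : forall x, x \notin T -> h x <= S / N%:R.
  move=> x xT.
  have sw : forall y, y \in T -> h x <= h y.
    move=> y yT.
    have c' : #|x |: (T :\ y)| == N.
      rewrite cardsU1 !inE (negbTE xT) andbF /=.
      move: (cardsD1 y T); rewrite yT cT => ->; by [].
    have := Tmax _ c'.
    rewrite big_setU1 /=; last by rewrite !inE (negbTE xT) andbF.
    rewrite /S (big_setD1 y yT) /=; lra.
  rewrite ler_pdivlMr //.
  have : \sum_(y in T) h x <= S by apply: ler_sum => y yT; exact: sw.
  by rewrite sumr_const cT mulr_natr.
have h0 : forall x, 0 <= h x by move=> x; rewrite /h sqr_ge0.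
have S0 : 0 <= S by apply: sumr_ge0.
rewrite /expect (bigID (fun x => x \in T)) /=.
set s1 := \sum_(x | x \in T) D x * g x.
set t1 := \sum_(x | x \notin T) D x * g x.
have hs : s1 ^+ 2 <= S / N%:R.
  have := @wCS R Omega (fun x => x \in T) (fun _ => 1) D g (fun _ _ => ler01).
  under eq_bigr do rewrite mul1r.
  under [X in _ <= X * _]eq_bigr do rewrite mul1r.
  under [X in _ <= _ * X]eq_bigr do rewrite mul1r.
  move=> H; apply: (le_trans H).
  rewrite mulrC -/S; apply: ler_wpM2l => //.
  apply: le_trans hcp; apply: sub_sum_le => x; exact: sqr_ge0.
have ht : t1 ^+ 2 <= S / N%:R.
  have := @wCS R Omega (fun x => x \notin T) D (fun _ => 1) g
     (fun x _ => D0 x).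
  under eq_bigr do rewrite mulr1.
  under [X in _ <= X * _]eq_bigr do rewrite expr1n mulr1.
  move=> H; apply: (le_trans H).
  have a0 : 0 <= S / N%:R by rewrite divr_ge0 // ler0n.
  have e1 : \sum_(x | x \notin T) D x <= 1.
    by rewrite -D1; apply: sub_sum_le.
  have e2 : \sum_(x | x \notin T) D x * g x ^+ 2 <=
            \sum_(x | x \notin T) D x * (S / N%:R).
    apply: ler_sum => x xT; apply: ler_wpM2l => //; exact: off.
  rewrite -mulr_suml in e2.
  have e3 : 0 <= \sum_(x | x \notin T) D x by apply: sumr_ge0.
  have e4 : 0 <= \sum_(x | x \notin T) D x * g x ^+ 2.
    by apply: sumr_ge0 => x _; rewrite mulr_ge0 // sqr_ge0.
  nra.
rewrite avgE.
set a := S / N%:R in hs ht *.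
have : (s1 + t1) ^+ 2 <= 4 * a by nra.
move=> H; rewrite ler_pdivrMr //; lra.
Qed.
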